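(* Let $\lambda>0$ and $\theta\in(0,\pi/2)$. For each $m>0$ set $n=m\tan\theta$, $X=(\lambda,0)$, $Y=(0,0)$, $Z=(m,n)$, and let $\varphi_m(\alpha,\beta)=\frac12(\alpha^2+2b\alpha\beta+a\beta^2)+c\alpha+d\beta$ be the conic satisfying (P1) $\varphi_m(X)=\varphi_m(Y)=\varphi_m(Z)=0$ and (P2) $Y-X$ is a positive multiple of $-\nabla\varphi_m(X)$ and $Z-Y$ is a positive multiple of $-\nabla\varphi_m(Y)$. Call $\{\varphi_m=0\}$ admissible if it is an ellipse. Then the set of centers $(u,v)$ of all admissible ellipses is contained in the line $u=\frac{\lambda}{2}-\frac{\tan\theta}{2}\,v$.
   Context: The center of an ellipse $\{\varphi=0\}$ is the point where $\nabla\varphi=0$. *)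

(* Defs.v *)
From Stdlib Require Import Reals.
Open Scope R_scope.

Definition phi (a b c d : R) (p : R * R) : R :=
  / 2 * ((fst p) ^ 2 + 2 * b * fst p * snd p + a * (snd p) ^ 2)
  + c * fst p + d * snd p.

Definition grad_phi (a b c d : R) (p : R * R) : R * R :=
  (fst p + b * snd p + c, b * fst p + a * snd p + d).

Definition is_ellipse (S : R * R -> Prop) : Prop :=
  exists (h k t p q : R), 0 < p /\ 0 < q /\
    forall z : R * R, S z <->
      exists s : R,
        z = (h + p * cos s * cos t - q * sin s * sin t,
             k + p * cos s * sin t + q * sin s * cos t).

Definition pos_multiple (w v : R * R) : Prop :=
  exists r : R, 0 < r /\ w = (r * fst v, r * snd v).

(* Main.v *)
Require Import Defs.
From Stdlib Require Import Reals Lra Psatz.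
Open Scope R_scope.

Theorem proposition4 (lam theta : R) :
  0 < lam -> 0 < theta < PI / 2 ->
  forall (m a b c d u v : R),
    0 < m ->
    let n := m * tan theta in
    let X := (lam, 0) in
    let Y := (0, 0) in
    let Z := (m, n) in
    (* (P1) *)
    phi a b c d X = 0 -> phi a b c d Y = 0 -> phi a b c d Z = 0 ->
    (* (P2) *)
    pos_multiple (fst Y - fst X, snd Y - snd X)
      (- fst (grad_phi a b c d X), - snd (grad_phi a b c d X)) ->
    pos_multiple (fst Z - fst Y, snd Z - snd Y)
      (- fst (grad_phi a b c d Y), - snd (grad_phi a b c d Y)) ->
    (* admissible: the zero set is an ellipse *)
    is_ellipse (fun z => phi a b c d z = 0) ->
    (* (u,v) is its center *)
    grad_phi a b c d (u, v) = (0, 0) ->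
    u = lam / 2 - tan theta / 2 * v.
Proof.
  intros Hl Ht m a b c d u v Hm n X Y Z HX HY HZ [r [Hr Er]] [r' [Hr' Er']] _ Hc.
  unfold phi, grad_phi, X, Y, Z in *; simpl in *.
  injection Er; intros E2 E1. injection Er'; intros E4 E3. injection Hc; intros C2 C1.
  assert (Hc0 : c = - lam / 2).
  { assert (lam * (lam / 2 + c) = 0) by (rewrite <- HX; field).
    apply Rmult_integral in H. destruct H; lra. }
  subst c.
  assert (Hr2 : r = 2).
  { assert (lam * (r - 2) = 0) by nra. apply Rmult_integral in H. destruct H; lra. }
  subst r.
  assert (Hd : d = - b * lam) by nra. subst d.
  assert (Hb : m * tan theta = 2 * m * b).
  { assert (E3' : m = r' * (lam / 2)) by lra.
    assert (E4' : m * tan theta = r' * (b * lam)) by (unfold n in E4; lra).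
    rewrite E4'. replace (2 * m * b) with (2 * b * m) by ring. rewrite E3'. clear -r'. field. }
  assert (tan theta = 2 * b).
  { apply (Rmult_eq_reg_l m); [lra|lra]. }
  rewrite H. lra.
Qed.
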